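(* Let $\mathbf v=(v_1,\dots,v_m)$ and $\mathbf k=(k_1,\dots,k_m)$ be $m$-tuples of positive integers with $\mathbf v\ge\mathbf k$, where $m\ge2$. Then \[ C(\mathbf v,\mathbf k,2)\ \ge\ \max_{\substack{1\le i,j\le m\\ i\neq j}}\left\lceil\frac{v_i}{k_i}\left\lceil\frac{v_j}{k_j}\right\rceil\right\rceil. \]
   Context: Let $X_1,\dots,X_m$ be pairwise disjoint sets with $|X_i|=v_i$. A block is an $m$-tuple $(B_1,\dots,B_m)$ with $B_i\subseteq X_i$, $|B_i|=k_i$. An $m$-tuple of sets $(T_1,\dots,T_m)$ is $(\mathbf v,\mathbf k,2)$-admissible if $T_i\subseteq X_i$, $|T_i|\le k_i$ and $\sum|T_i|=2$; it is contained in a block if $T_i\subseteq B_i$ for all $i$. A ${\rm GC}(\mathbf v,\mathbf k,2)$ is a finite family (repetitions allowed) of blocks containing every admissible tuple in at least one block; $C(\mathbf v,\mathbf k,2)$ is the minimum number of blocks. *)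

(* Defs.v *)
From HB Require Import structures.
From mathcomp Require Import all_boot all_order all_algebra.
Set Implicit Arguments. Unset Strict Implicit. Unset Printing Implicit Defensive.
Import Order.TTheory GRing.Theory Num.Theory.

(* Ground set: disjoint union of X_1..X_m, with X_i = 'I_(v i).
   A point is a dependent pair (i, x) with x : 'I_(v i). *)
Definition point (m : nat) (v : 'I_m -> nat) := {i : 'I_m & 'I_(v i)}.

(* A block (B_1,...,B_m), B_i ⊆ X_i, |B_i| = k_i, represented as the subset
   B = ⊔ B_i of the disjoint union. *)
Definition is_block (m : nat) (v k : 'I_m -> nat) (B : {set point v}) : Prop :=
  forall i : 'I_m, #|[set x in B | tag x == i]| = k i.

(* (v,k,2)-admissible tuple (T_1..T_m): sum |T_i| = 2, |T_i| <= k_i.  It is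
   determined by its union T = {x, y} with x <> y, the only constraint being
   that if x,y lie in the same X_i then 2 <= k_i. *)
Definition admissible_pair (m : nat) (v k : 'I_m -> nat) (x y : point v) : Prop :=
  x <> y /\ (tag x = tag y -> 2 <= k (tag x))%N.

Definition is_GC (m : nat) (v k : 'I_m -> nat) (F : seq {set point v}) : Prop :=
  (forall B, B \in F -> is_block k B) /\
  (forall x y : point v, admissible_pair k x y ->
     exists2 B, B \in F & (x \in B) && (y \in B)).

(* Main.v *)
Require Import Defs.
From HB Require Import structures.
From mathcomp Require Import all_boot all_order all_algebra.
Import Order.TTheory GRing.Theory Num.Theory.
Local Open Scope ring_scope.

Lemma cardtag (m : nat) (v : 'I_m -> nat) (A : {set point v}) (i : 'I_m) :
  #|[set z in A | tag z == i]| =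
  #|[set x : 'I_(v i) | (Tagged (fun i => 'I_(v i)) x : point v) \in A]|.
Proof.
rewrite -(card_imset _ (@eq_from_Tagged _ (fun i => 'I_(v i)) i)).
apply: eq_card => z; rewrite inE; case: z => i' y /=.
apply/andP/imsetP.
- by move=> [Hz /eqP Hi]; subst i'; exists y; rewrite ?inE.
- move=> [y' Hy' Hz]; move: Hy'; rewrite inE -Hz => ->; split => //.
  by have := congr1 (@tag _ _) Hz => /= ->.
Qed.

Lemma card_has (T : finType) (P : pred {set T}) (f : {set T} -> {set T})
  (K : nat) (F : seq {set T}) :
  (forall B, B \in F -> #|f B| = K) ->
  (#|[set z | has (fun B => P B && (z \in f B)) F]| <= count P F * K)%N.
Proof.
elim: F => [|B F IH] HF.
  by rewrite (_ : [set z | _] = set0) ?cards0 //; apply/setP => z; rewrite !inE.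
have -> : [set z | has (fun B0 => P B0 && (z \in f B0)) (B :: F)] =
  (if P B then f B else set0) :|: [set z | has (fun B0 => P B0 && (z \in f B0)) F].
  by apply/setP => z; rewrite !inE /=; case: (P B) => //=; rewrite inE.
apply: leq_trans (leq_card_setU _ _) _.
rewrite /= mulnDl; apply: leq_add.
  case: (P B) => /=; last by rewrite cards0.
  by rewrite mul1n HF // mem_head.
by apply: IH => B0 HB0; apply: HF; rewrite inE HB0 orbT.
Qed.

Theorem corollary5p3 (m : nat) (v k : 'I_m -> nat)
  (hm : (2 <= m)%N)
  (hk : forall i, (0 < k i)%N)
  (hv : forall i, (0 < v i)%N)
  (hvk : forall i, (k i <= v i)%N)
  (F : seq {set point v}) (hF : is_GC k F) :
  forall i j : 'I_m, i != j ->
    Num.ceil ((v i)%:R / (k i)%:R * (Num.ceil ((v j)%:R / (k j)%:R : rat))%:~R : rat)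
      <= (size F)%:Z.
Proof.
move=> i j hij.
case: hF => hB hcov.
pose px (x : 'I_(v i)) : point v := Tagged (fun i => 'I_(v i)) x.
pose r (x : 'I_(v i)) := count (fun B : {set point v} => px x \in B) F.
have step1 : forall x, (v j <= r x * k j)%N.
  move=> x.
  pose U := [set z : point v | has (fun B : {set point v} => (px x \in B) && (z \in [set z0 in B | tag z0 == j])) F].
  have -> : v j = #|[set: 'I_(v j)]| by rewrite cardsT card_ord.
  apply: leq_trans (_ : #|[set y : 'I_(v j) | (Tagged (fun i => 'I_(v i)) y : point v) \in U]| <= _)%N.
    apply: subset_leq_card; apply/subsetP => y _; rewrite inE.
    have [|B HB /andP [H1 H2]] := hcov (px x) (Tagged (fun i => 'I_(v i)) y).
      split.
        move=> E; have := congr1 (@tag _ _) E => /= Eij.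
        by move: hij; rewrite Eij eqxx.
      by move=> /= Eij; move: hij; rewrite Eij eqxx.
    rewrite inE; apply/hasP; exists B => //; rewrite H1 /= inE H2 /=.
    by [].
  rewrite -cardtag; apply: (@leq_trans #|U|).
    by apply: subset_leq_card; apply/subsetP => z; rewrite inE => /andP [].
  have HH := @card_has _ (fun B : {set point v} => px x \in B) (fun B => [set z0 in B | tag z0 == j]) (k j) F (fun B HB => hB B HB j).
  exact: HH.
have step2 : (\sum_(x < v i) r x = size F * k i)%N.
  rewrite /r; elim: F hB {hcov step1 r} => [|B F IH] hB.
    by rewrite big1.
  rewrite /= big_split /= IH; last by move=> B0 HB0; apply: hB; rewrite inE HB0 orbT.
  congr (_ + _)%N.
  rewrite -(hB B (mem_head _ _) i) cardtag -sum1_card big_mkcond /=.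
  rewrite [RHS]big_mkcond; apply: eq_bigr => x _; rewrite inE; by case: (_ \in B).
set C := Num.ceil ((v j)%:R / (k j)%:R : rat).
have hC : forall x, C <= (r x)%:Z.
  move=> x; rewrite /C ceil_le_int ler_pdivrMr ?ltr0n //.
  by rewrite -natrM ler_nat step1.
have H : (v i)%:R * C <= (size F * k i)%:R :> int.
  rewrite -step2 natr_sum mulr_natl.
  have -> : C *+ v i = \sum_(x < v i) C by rewrite sumr_const card_ord.
  by apply: ler_sum => x _; rewrite natz; apply: hC.
rewrite ceil_le_int mulrAC ler_pdivrMr ?ltr0n //.
have := H; rewrite -(ler_int rat) => H'.
move: H'; rewrite rmorphM /= !rmorph_nat natrM => H'.
exact: H'.
Qed.
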